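(* Let $G=(V,E)$ be a connected graph, $\tau$ a set of types, $f:\tau\to\mathbb{Q}_{\ge1}$ a fitness function, and $\alpha\in\tau$. Let $\beta=\arg\min\{f(j):j\in\tau\setminus\{\alpha\}\}$ and $\tau'=\{\alpha,\beta\}$. Let $\Omega$ (resp. $\Omega'$) be the set of functions $V\to\tau$ (resp. $V\to\tau'$) and define $g:\Omega\to\Omega'$ by $g(S)(v)=\alpha$ if $S(v)=\alpha$ and $g(S)(v)=\beta$ otherwise. Then for every $M_0\in\Omega$, $\pi_\alpha(G,\tau,f,M_0)\le\pi_\alpha(G,\tau',f,g(M_0))$ (where on the right $f$ is restricted to $\tau'$).
   Context: For $G=(V,E)$, $N(v)$ is the neighbourhood of $v$. For a state $S:V\to\tau$ and $v,w\in V$, $S|_{v\to w}$ equals $S$ except $w$ gets type $S(v)$. The Moran process $M(G,\tau,f,M_0)$ is the Markov chain on states started at $M_0$ in which, given $M_t$, a vertex $v$ is chosen with probability $f(M_t(v))/\sum_{u\in V}f(M_t(u))$, then $w\in N(v)$ uniformly at random, and $M_{t+1}=M_t|_{v\to w}$. $\pi_j(G,\tau,f,M_0)$ is the probability that at some time every vertex has type $j$. *)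

(* Defs.v *)
From HB Require Import structures.
From mathcomp Require Import all_boot all_order all_algebra.
From mathcomp Require Import all_classical all_reals all_analysis.
Set Implicit Arguments. Unset Strict Implicit. Unset Printing Implicit Defensive.
Import Order.TTheory GRing.Theory Num.Theory numFieldNormedType.Exports.
Local Open Scope ring_scope.

Section Moran.
Variables (R : realType) (V T : finType) (e : rel V) (f : T -> rat).

Definition nbhd (v : V) : {set V} := [set w | e v w].

Definition upd (S : {ffun V -> T}) (v w : V) : {ffun V -> T} :=
  [ffun u => if u == w then S v else S u].

Definition totfit (S : {ffun V -> T}) : R := \sum_(u : V) ratr (f (S u)).

Definition moranP (S S' : {ffun V -> T}) : R :=
  \sum_(v : V) (ratr (f (S v)) / totfit S) *
    \sum_(w in nbhd v) (#|nbhd v|%:R^-1 * (S' == upd S v w)%:R).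

Definition mono (j : T) (S : {ffun V -> T}) : bool := [forall v, S v == j].

(* probability that, started at S, the chain is monochromatic of type j
   at some time t <= n *)
Fixpoint hitp (j : T) (n : nat) (S : {ffun V -> T}) : R :=
  if mono j S then 1 else
  match n with
  | 0 => 0
  | n'.+1 => \sum_(S' : {ffun V -> T}) moranP S S' * hitp j n' S'
  end.

(* pi_j(G,T,f,M0): probability that at some time every vertex has type j,
   i.e. the limit of the (nondecreasing, bounded) sequence hitp j n M0 *)
Definition fixprob (j : T) (M0 : {ffun V -> T}) : R :=
  limn (fun n => hitp j n M0).

End Moran.

Definition pairT (T : finType) (a b : T) := {j : T | j \in [:: a; b]}.

Lemma pairT_a (T : finType) (a b : T) : a \in [:: a; b].
Proof. by rewrite inE eqxx. Qed.
Lemma pairT_b (T : finType) (a b : T) : b \in [:: a; b].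
Proof. by rewrite !inE eqxx orbT. Qed.

Definition pa (T : finType) (a b : T) : pairT a b := exist _ a (pairT_a a b).
Definition pb (T : finType) (a b : T) : pairT a b := exist _ b (pairT_b a b).

Definition gmap (V T : finType) (a b : T) (S : {ffun V -> T})
  : {ffun V -> pairT a b} :=
  [ffun v => if S v == a then pa a b else pb a b].

(* Main.v *)
Require Import Defs.
From HB Require Import structures.
From mathcomp Require Import all_boot all_order all_algebra.
From mathcomp Require Import all_classical all_reals all_analysis.
From mathcomp Require Import ring lra.
Import Order.TTheory GRing.Theory Num.Theory numFieldNormedType.Exports.
Local Open Scope ring_scope.
Set Implicit Arguments. Unset Strict Implicit.

Section Gen.
Variables (R : realType) (V T : finType) (e : rel V) (f : T -> rat).
Hypothesis fge1 : forall j, 1 <= f j.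

Local Notation st := {ffun V -> T}.
Definition dg (v : V) : R := (#|nbhd e v|%:R)^-1.
Definition fr (S : {ffun V -> T}) v : R := ratr (f (S v)).
Definition stepf (phi : {ffun V -> T} -> R) S : R :=
  \sum_v fr S v * \sum_(w in nbhd e v) dg v * phi (upd S v w).

Lemma fr_ge1 (S : st) v : 1 <= fr S v.
Proof. by rewrite /fr -(rmorph1 (@ratr R)) ler_rat. Qed.
Lemma fr_ge0 (S : st) v : 0 <= fr S v.
Proof. exact: le_trans ler01 (fr_ge1 S v). Qed.
Lemma dg_ge0 v : 0 <= dg v.
Proof. by rewrite /dg invr_ge0 ler0n. Qed.

Lemma totfitE (S : st) : totfit R f S = \sum_v fr S v.
Proof. by []. Qed.

Lemma totfit_ge0 (S : st) : 0 <= totfit R f S.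
Proof. rewrite totfitE; apply: sumr_ge0 => v _; exact: fr_ge0. Qed.

Lemma totfit_gt0 (S : st) (v : V) : 0 < totfit R f S.
Proof.
rewrite totfitE (bigD1 v) //=; apply: lt_le_trans ltr01 _.
apply: le_trans (fr_ge1 S v) _.
by rewrite lerDl; apply: sumr_ge0 => u _; exact: fr_ge0.
Qed.

Lemma nonmono_gt0 j (S : st) : ~~ mono j S -> 0 < totfit R f S.
Proof.
rewrite /mono negb_forall => /existsP [v _]; exact: totfit_gt0 v.
Qed.

Lemma sum_ind (X : st) (c : R) (phi : st -> R) :
  \sum_(i : st) c * (i == X)%:R * phi i = c * phi X.
Proof.
rewrite (bigD1 X) //= eqxx mulr1 big1 ?addr0 //.
by move=> S' /negbTE ->; rewrite mulr0 mul0r.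
Qed.

Lemma moranP_sum (S : st) phi :
  \sum_S' moranP R e f S S' * phi S' = stepf phi S / totfit R f S.
Proof.
rewrite /moranP /stepf.
under eq_bigr => S' _ do rewrite big_distrl /=.
rewrite exchange_big /= big_distrl /=.
apply: eq_bigr => v _.
under eq_bigr => i _ do rewrite -(mulrA (ratr _ / _)) big_distrl /=.
rewrite -big_distrr /= exchange_big /= mulrAC /fr /dg.
by under eq_bigr => w _ do rewrite sum_ind.
Qed.

Lemma hitpS j n (S : st) : hitp R e f j n.+1 S =
  if mono j S then 1 else stepf (hitp R e f j n) S / totfit R f S.
Proof. by rewrite /= moranP_sum. Qed.

Lemma stepf_le (phi psi : {ffun V -> T} -> R) S :
  (forall X, phi X <= psi X) -> stepf phi S <= stepf psi S.
Proof.
move=> H; apply: ler_sum => v _; apply: ler_wpM2l; first exact: fr_ge0.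
apply: ler_sum => w _; apply: ler_wpM2l; [exact: dg_ge0 | exact: H].
Qed.

Lemma stepf_ge0 (phi : {ffun V -> T} -> R) S :
  (forall X, 0 <= phi X) -> 0 <= stepf phi S.
Proof.
move=> H; apply: sumr_ge0 => v _; apply: mulr_ge0; first exact: fr_ge0.
apply: sumr_ge0 => w _; apply: mulr_ge0; [exact: dg_ge0 | exact: H].
Qed.

Lemma sum_dg_le1 v : \sum_(w in nbhd e v) dg v <= 1.
Proof.
rewrite sumr_const /dg; case: (posnP #|nbhd e v|) => [->|hp].
  by rewrite mulr0n ler01.
rewrite -[X in X <= _]mulr_natr mulVf // pnatr_eq0 -lt0n //.
Qed.

Lemma stepf_le1 (phi : {ffun V -> T} -> R) S :
  (forall X, phi X <= 1) -> stepf phi S <= totfit R f S.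
Proof.
move=> H; rewrite totfitE; apply: ler_sum => v _.
rewrite -[X in _ <= X]mulr1; apply: ler_wpM2l; first exact: fr_ge0.
apply: le_trans (sum_dg_le1 v); apply: ler_sum => w _.
rewrite -[X in _ <= X]mulr1; apply: ler_wpM2l; [exact: dg_ge0 | exact: H].
Qed.

Lemma hitp_bnd j n (S : st) : 0 <= hitp R e f j n S <= 1.
Proof.
elim: n S => [|n IH] S; first by rewrite /=; case: mono; rewrite ?ler01 ?lexx.
rewrite hitpS; case: ifP => [_|hm]; first by rewrite ler01 lexx.
have hF := nonmono_gt0 (negbT hm).
apply/andP; split.
  apply: divr_ge0; last exact: ltW.
  by apply: stepf_ge0 => X; case/andP: (IH X).
rewrite ler_pdivrMr // mul1r; apply: stepf_le1 => X; by case/andP: (IH X).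
Qed.

Lemma hitp_incr j n (S : st) : hitp R e f j n S <= hitp R e f j n.+1 S.
Proof.
elim: n S => [|n IH] S.
  rewrite hitpS /=; case: ifP => // _.
  apply: divr_ge0; last exact: totfit_ge0.
  by apply: stepf_ge0 => X; case/andP: (hitp_bnd j 0 X).
rewrite (hitpS j n.+1) (hitpS j n); case: ifP => // hm.
apply: ler_wpM2r; first by rewrite invr_ge0 totfit_ge0.
exact: stepf_le.
Qed.


Lemma hitp_cvg j (S : st) : cvgn (fun n => hitp R e f j n S).
Proof.
apply: nondecreasing_is_cvgn.
  by apply/nondecreasing_seqP => n; exact: hitp_incr.
by exists 1 => _ [n _ <-]; case/andP: (hitp_bnd j n S).
Qed.

Fixpoint lazy (C : R) j n (S : st) : R :=
  if mono j S then 1 else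
  match n with
  | 0 => 0
  | n'.+1 => stepf (lazy C j n') S / C + (1 - totfit R f S / C) * lazy C j n' S
  end.

Variables (C : R) (Cpos : 0 < C) (CF : forall S : st, totfit R f S <= C).

Lemma lazyS j n (S : st) : lazy C j n.+1 S = if mono j S then 1 else
  stepf (lazy C j n) S / C + (1 - totfit R f S / C) * lazy C j n S.
Proof. by []. Qed.

Lemma FC_le1 (S : st) : totfit R f S / C <= 1.
Proof. by rewrite ler_pdivrMr // mul1r. Qed.

Lemma lazy_bnd j n (S : st) : 0 <= lazy C j n S <= 1.
Proof.
elim: n S => [|n IH] S; first by rewrite /=; case: mono; rewrite ?ler01 ?lexx.
rewrite lazyS; case: ifP => [_|hm]; first by rewrite ler01 lexx.
have h1 := FC_le1 S.
have hs0 : 0 <= stepf (lazy C j n) S by apply: stepf_ge0 => X; case/andP: (IH X).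
have hs1 : stepf (lazy C j n) S / C <= totfit R f S / C.
  by apply: ler_wpM2r; [rewrite invr_ge0 ltW | apply: stepf_le1 => X; case/andP: (IH X)].
case/andP: (IH S) => l0 l1.
have hs2 : 0 <= stepf (lazy C j n) S / C by apply: divr_ge0 => //; exact: ltW.
have hy : 0 <= 1 - totfit R f S / C by rewrite subr_ge0.
apply/andP; split.
  by apply: addr_ge0 => //; apply: mulr_ge0.
apply: le_trans (_ : totfit R f S / C + (1 - totfit R f S / C) <= 1).
  apply: lerD => //; rewrite -[X in _ <= X]mulr1; exact: ler_wpM2l.
by rewrite addrC subrK.
Qed.

Lemma lazy_step_le j n m (S : st) :
  (forall X, lazy C j n X <= lazy C j m X) -> lazy C j n.+1 S <= lazy C j m.+1 S.
Proof.
move=> H; rewrite !lazyS; case: ifP => // _.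
apply: lerD.
  by apply: ler_wpM2r; [rewrite invr_ge0 ltW | exact: stepf_le].
by apply: ler_wpM2l; [rewrite subr_ge0 FC_le1 | exact: H].
Qed.

Lemma lazy_incr j n (S : st) : lazy C j n S <= lazy C j n.+1 S.
Proof.
elim: n S => [|n IH] S.
  by move: (lazy_bnd j 1 S); rewrite lazyS /=; case: (mono j S) => // /andP[].
exact: lazy_step_le.
Qed.

Lemma lazy_cvg j (S : st) : cvgn (fun n => lazy C j n S).
Proof.
apply: nondecreasing_is_cvgn.
  by apply/nondecreasing_seqP => n; exact: lazy_incr.
by exists 1 => _ [n _ <-]; case/andP: (lazy_bnd j n S).
Qed.

Lemma lazy_le_hitp j n (S : st) : lazy C j n S <= hitp R e f j n S.
Proof.
elim: n S => [|n IH] S; first by [].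
rewrite lazyS (hitpS j n); case: ifP => // hm.
have hF := nonmono_gt0 (negbT hm).
apply: le_trans (_ : stepf (hitp R e f j n) S / C
     + (1 - totfit R f S / C) * hitp R e f j n.+1 S <= _).
  apply: lerD.
    by apply: ler_wpM2r; [rewrite invr_ge0 ltW | exact: stepf_le].
  apply: ler_wpM2l; first by rewrite subr_ge0 FC_le1.
  exact: le_trans (IH S) (hitp_incr j n S).
rewrite hitpS hm.
set x := stepf _ S; set F := totfit R f S.
have -> : x / C = F / C * (x / F).
  have hF0 : F != 0 by exact: lt0r_neq0.
  have hC0 : C != 0 by exact: lt0r_neq0.
  by field; rewrite hF0 hC0.
by rewrite -mulrDl [F / C + _]addrC subrK mul1r.
Qed.


Definition hlim j (X : st) := limn (fun n => lazy C j n X).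

Lemma stepf_cvg j (S : st) :
  ((fun n => stepf (lazy C j n) S) @ \oo --> stepf (hlim j) S)%classic.
Proof.
apply: cvg_big => [|v _]; first exact: add_continuous.
apply: cvgMr; apply: cvg_big => [|w _]; first exact: add_continuous.
apply: cvgMr; exact: lazy_cvg.
Qed.

Lemma hlim_harm j (S : st) : ~~ mono j S ->
  stepf (hlim j) S = totfit R f S * hlim j S.
Proof.
move=> hm.
have c1 : ((fun n => lazy C j n.+1 S) @ \oo --> hlim j S)%classic.
  by rewrite (cvg_shiftS (fun n => lazy C j n S)); exact: lazy_cvg.
have c2 : ((fun n => lazy C j n.+1 S) @ \oo -->
    stepf (hlim j) S / C + (1 - totfit R f S / C) * hlim j S)%classic.
  have -> : (fun n => lazy C j n.+1 S) = (fun n => stepf (lazy C j n) S / C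
      + (1 - totfit R f S / C) * lazy C j n S).
    by apply: funext => n; rewrite lazyS (negbTE hm).
  apply: cvgD; first by apply: cvgMl; exact: stepf_cvg.
  by apply: cvgMr; exact: lazy_cvg.
have E := norm_cvg_unique c1 c2.
move: E; set s := stepf _ S; set F := totfit R f S; set h := hlim j S => E.
have hC0 : C != 0 by exact: lt0r_neq0.
have E2 : s / C = F / C * h.
  have -> : s / C = h - (1 - F / C) * h by rewrite {1}E addrK.
  ring.
by rewrite -(divfK hC0 s) E2 mulrAC divfK.
Qed.

Lemma limn_const (u : nat -> R) (c : R) : (forall n, u n = c) -> limn u = c.
Proof.
move=> H; have -> : u = (fun=> c) by apply: funext => n; exact: H.
apply: norm_cvg_lim; exact: cvg_cst.
Qed.

Lemma hlim_mono j (S : st) : mono j S -> hlim j S = 1.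
Proof. by move=> hm; apply: limn_const => -[|n] /=; rewrite hm. Qed.

Lemma hlim_ge0 j (S : st) : 0 <= hlim j S.
Proof.
apply: limr_ge; first exact: lazy_cvg.
by apply: nearW => n; case/andP: (lazy_bnd j n S).
Qed.

Lemma hlim_le1 j (S : st) : hlim j S <= 1.
Proof.
apply: limr_le; first exact: lazy_cvg.
by apply: nearW => n; case/andP: (lazy_bnd j n S).
Qed.

Lemma hlim_le_fix j (S : st) : hlim j S <= fixprob R e f j S.
Proof.
apply: ler_lim; [exact: lazy_cvg | exact: hitp_cvg |].
by apply: nearW => n; exact: lazy_le_hitp.
Qed.

End Gen.

Section Iso.
Variables (R : realType) (V T : finType) (e : rel V) (f : T -> rat).
Local Notation st := {ffun V -> T}.

Lemma dg_sum1 v : nbhd e v != finset.set0 -> \sum_(w in nbhd e v) (dg R e v) = 1.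
Proof.
move=> hn; rewrite sumr_const /dg.
have hp : (0 < #|nbhd e v|)%N by rewrite card_gt0.
by rewrite -[X in X = _]mulr_natr mulVf // pnatr_eq0 -lt0n.
Qed.

Lemma dg_sub v (g : V -> R) (c : R) : nbhd e v != finset.set0 ->
  \sum_(w in nbhd e v) dg R e v * (g w - c) = \sum_(w in nbhd e v) dg R e v * g w - c.
Proof.
move=> hn; under eq_bigr => w _ do rewrite mulrBr.
rewrite sumrB; congr (_ - _).
have := dg_sum1 hn; rewrite sumr_const => H.
by rewrite sumr_const -mulrnAl H mul1r.
Qed.

Lemma hitp_iso j n (S : st) : (forall v, nbhd e v = finset.set0) ->
  hitp R e f j n S = (mono j S)%:R.
Proof.
move=> H; case: n => [|n] /=; first by case: mono.
case: mono => //; rewrite big1 // => S' _.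
rewrite /moranP big1 ?mul0r // => v _.
by rewrite H big_set0 mulr0.
Qed.

Lemma fix_iso j (S : st) : (forall v, nbhd e v = finset.set0) ->
  fixprob R e f j S = (mono j S)%:R.
Proof. by move=> H; apply: limn_const => n; exact: hitp_iso. Qed.

End Iso.

Section Two.
Variables (R : realType) (V T : finType) (e : rel V) (f : T -> rat) (a b : T).
Hypothesis fge1 : forall j, 1 <= f j.
Hypothesis ab : b != a.
Hypothesis noiso : forall v, nbhd e v != finset.set0.
Local Notation P := (pairT a b).
Local Notation st2 := {ffun V -> P}.
Definition f2 (j : P) := f (val j).
Definition C2 : R := \sum_(v : V) (ratr (f a) + ratr (f b)) + 1.

Lemma f2ge1 j : 1 <= f2 j. Proof. exact: fge1. Qed.

Lemma pairE (j : P) : j = pa a b \/ j = pb a b.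
Proof.
case: j => x hx; have := hx; rewrite !inE => /orP [] /eqP hx'.
  by left; apply: val_inj; rewrite /= hx'.
by right; apply: val_inj; rewrite /= hx'.
Qed.

Lemma pa_pb : pa a b != pb a b.
Proof. apply/negP => /eqP /(congr1 val) /= /eqP; by rewrite eq_sym (negbTE ab). Qed.

Lemma ratr_ge0 j : 0 <= ratr (f j) :> R.
Proof. by rewrite ler0q; exact: le_trans ler01 (fge1 j). Qed.

Lemma C2pos : 0 < C2.
Proof.
rewrite /C2; apply: ltr_wpDl; last exact: ltr01.
by apply: sumr_ge0 => v _; apply: addr_ge0; exact: ratr_ge0.
Qed.

Lemma C2F (S : st2) : totfit R f2 S <= C2.
Proof.
rewrite /C2 totfitE; apply: (@le_trans _ _ (\sum_(v : V) (ratr (f a) + ratr (f b)))); last by rewrite lerDl ler01.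
apply: ler_sum => v _; rewrite /fr /f2.
case: (pairE (S v)) => -> /=.
  by rewrite lerDl ratr_ge0.
by rewrite lerDr ratr_ge0.
Qed.

Definition le2 (A B : st2) := forall v, A v = pa a b -> B v = pa a b.

Lemma mono_le2 A B : le2 A B -> mono (pa a b) A -> mono (pa a b) B.
Proof.
by move=> H /forallP hA; apply/forallP => v; apply/eqP; apply: H; apply/eqP.
Qed.

Lemma le2_upd A B v w : le2 A B -> A v = B v -> le2 (upd A v w) (upd B v w).
Proof. by move=> H hv u; rewrite !ffunE; case: (u == w); [rewrite hv | exact: H]. Qed.

Lemma upd_le_b (A : st2) v w : A v = pb a b -> le2 (upd A v w) A.
Proof.
move=> hv u; rewrite ffunE; case: (u == w) => //.
by rewrite hv => /eqP; rewrite eq_sym (negbTE pa_pb).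
Qed.

Lemma upd_ge_a (B : st2) v w : B v = pa a b -> le2 B (upd B v w).
Proof. by move=> hv u; rewrite ffunE; case: (u == w) => // ->. Qed.

Local Notation lz := (lazy e f2 C2 (pa a b)).

Lemma lazy_mono2 n (A B : st2) : le2 A B -> lz n A <= lz n B.
Proof.
elim: n A B => [|n IH] A B hAB.
  rewrite /=; case: ifP => hA; first by rewrite (mono_le2 hAB hA).
  by case: mono; rewrite ?ler01 ?lexx.
case hB: (mono (pa a b) B).
  rewrite [X in _ <= X]lazyS hB.
  by case/andP: (lazy_bnd e f2ge1 C2pos C2F (pa a b) n.+1 A).
have hA : mono (pa a b) A = false.
  by apply: negbTE; apply/negP => /(mono_le2 hAB); rewrite hB.
rewrite !lazyS hA hB.
set phi := lz n.
pose E (S : st2) v := \sum_(w in nbhd e v) dg R e v * phi (upd S v w).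
have K : \sum_v fr R f2 A v * (E A v - phi B) <= \sum_v fr R f2 B v * (E B v - phi B).
  apply: ler_sum => v _.
  case: (eqVneq (A v) (B v)) => hv.
    rewrite /fr hv; apply: ler_wpM2l; first exact: ratr_ge0.
    rewrite lerB // /E; apply: ler_sum => w _; apply: ler_wpM2l; first exact: dg_ge0.
    by apply: IH; exact: le2_upd.
  have hAv : A v = pb a b.
    case: (pairE (A v)) => // h; by move: hv; rewrite h (hAB v h) eqxx.
  have hBv : B v = pa a b.
    case: (pairE (B v)) => // h; by move: hv; rewrite hAv h eqxx.
  apply: (@le_trans _ _ 0).
    apply: mulr_ge0_le0; first exact: (fr_ge0 _ f2ge1).
    rewrite subr_le0; apply: le_trans (IH _ _ hAB).
    rewrite /E -[X in _ <= X]mul1r -(dg_sum1 R (noiso v)) big_distrl /=.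
    apply: ler_sum => w _; apply: ler_wpM2l; first exact: dg_ge0.
    by apply: IH; exact: upd_le_b.
  apply: mulr_ge0; first exact: (fr_ge0 _ f2ge1).
  rewrite subr_ge0 /E -[X in X <= _]mul1r -(dg_sum1 R (noiso v)) big_distrl /=.
  apply: ler_sum => w _; apply: ler_wpM2l; first exact: dg_ge0.
  by apply: IH; exact: upd_ge_a.
have eqS (S : st2) : \sum_v fr R f2 S v * (E S v - phi B)
    = stepf e f2 phi S - totfit R f2 S * phi B.
  rewrite /stepf totfitE big_distrl -sumrB; apply: eq_bigr => v _.
  by rewrite mulrBr.
rewrite !eqS in K.
have hp : phi A <= phi B by exact: IH.
have hC := C2pos.
have hFA := C2F A.
have hFB := C2F B.
move: K hp hFA hFB hC.
set sA := stepf _ _ _ A; set sB := stepf _ _ _ B.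
set FA := totfit _ _ A; set FB := totfit _ _ B.
set pA := phi A; set pB := phi B; set C := C2 => K hp hFA hFB hC.
have hC0 : C != 0 by exact: lt0r_neq0.
have -> : sA / C + (1 - FA / C) * pA = (sA + (C - FA) * pA) / C by field.
have -> : sB / C + (1 - FB / C) * pB = (sB + (C - FB) * pB) / C by field.
apply: ler_wpM2r; first by rewrite invr_ge0 ltW.
have : (C - FA) * pA <= (C - FA) * pB by apply: ler_wpM2l; rewrite // subr_ge0.
lra.
Qed.

End Two.

Section Main.
Variables (R : realType) (V T : finType) (e : rel V) (f : T -> rat) (a b : T).
Hypothesis fge1 : forall j, 1 <= f j.
Hypothesis ab : b != a.
Hypothesis bmin : forall j, j != a -> f b <= f j.
Hypothesis noiso : forall v, nbhd e v != finset.set0.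
Local Notation P := (pairT a b).
Local Notation st2 := {ffun V -> P}.
Local Notation st := {ffun V -> T}.

Let Cp := C2pos R V a b fge1.
Let CF := C2F R (V := V) (a := a) (b := b) fge1.
Let f2g := f2ge1 (a := a) (b := b) fge1.
Let h := hlim e (@f2 T f a b) (C2 R V f a b) (pa a b).

Lemma gmap_upd (S : st) v w : gmap a b (upd S v w) = upd (gmap a b S) v w.
Proof. by apply/ffunP => u; rewrite !ffunE; case: (u == w). Qed.

Lemma mono_g (S : st) : mono (pa a b) (gmap a b S) = mono a S.
Proof.
apply: eq_forallb => v; rewrite ffunE; case: ifP => hv.
  by rewrite eqxx.
apply/negbTE; rewrite eq_sym; exact: pa_pb.
Qed.

Lemma hmono (A B : st2) : le2 A B -> h A <= h B.
Proof.
move=> hAB; rewrite /h /hlim; apply: ler_lim.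
- exact: (lazy_cvg f2g Cp CF).
- exact: (lazy_cvg f2g Cp CF).
by apply: nearW => n; exact: lazy_mono2 fge1 ab noiso n A B hAB.
Qed.

Lemma superh (S : st) : ~~ mono a S ->
  stepf e f (fun X => h (gmap a b X)) S <= totfit R f S * h (gmap a b S).
Proof.
move=> hm; set A := gmap a b S.
have hA : ~~ mono (pa a b) A by rewrite mono_g.
have H2 := hlim_harm e f2g Cp CF hA.
pose D v := \sum_(w in nbhd e v) dg R e v * (h (upd A v w) - h A).
have E1 : stepf e f (fun X => h (gmap a b X)) S - totfit R f S * h A
    = \sum_v fr R f S v * D v.
  rewrite /stepf totfitE big_distrl -sumrB; apply: eq_bigr => v _.
  rewrite -mulrBr /D dg_sub //.
  by under eq_bigr => w _ do rewrite gmap_upd.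
have E2 : stepf e (@f2 T f a b) h A - totfit R (@f2 T f a b) A * h A
    = \sum_v fr R (@f2 T f a b) A v * D v.
  rewrite /stepf totfitE big_distrl -sumrB; apply: eq_bigr => v _.
  by rewrite -mulrBr /D dg_sub.
rewrite -subr_le0 E1.
have E3 : \sum_v fr R (@f2 T f a b) A v * D v = 0 by rewrite -E2 /h H2 subrr.
rewrite -[X in _ <= X]E3.
apply: ler_sum => v _.
case: (eqVneq (S v) a) => hv.
  by rewrite /fr /f2 /A ffunE hv eqxx /=.
have hAv : A v = pb a b by rewrite /A ffunE (negbTE hv).
apply: ler_wnM2r.
  apply: sumr_le0 => w _; apply: mulr_ge0_le0; first exact: dg_ge0.
  by rewrite subr_le0; apply: hmono; exact: upd_le_b.
by rewrite /fr /f2 hAv /= ler_rat; exact: bmin.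
Qed.

Lemma hitp_le_h n (S : st) : hitp R e f a n S <= h (gmap a b S).
Proof.
elim: n S => [|n IH] S.
  rewrite /=; case: ifP => hm; first by rewrite /h hlim_mono // mono_g.
  exact: (hlim_ge0 e f2g Cp CF).
rewrite hitpS; case: ifP => hm; first by rewrite /h hlim_mono // mono_g.
have hF := nonmono_gt0 R fge1 (negbT hm).
rewrite ler_pdivrMr // mulrC.
apply: le_trans (superh (negbT hm)).
exact: (@stepf_le R V T e f fge1 (hitp R e f a n) (fun X => h (gmap a b X)) S IH).
Qed.

Lemma main_noiso (M0 : st) :
  fixprob R e f a M0 <= fixprob R e (@f2 T f a b) (pa a b) (gmap a b M0).
Proof.
apply: le_trans (hlim_le_fix e f2g Cp CF (pa a b) (gmap a b M0)).
rewrite {1}/fixprob; apply: limr_le; first exact: (hitp_cvg fge1).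
by apply: nearW => n; exact: hitp_le_h.
Qed.

End Main.

Lemma first_step (V : finType) (e : rel V) (x y : V) :
  connect e x y -> x != y -> exists z, e x z.
Proof.
move/connectP => [p pth ->]; case: p pth => [|z p] /=; first by rewrite eqxx.
by case/andP => hz _ _; exists z.
Qed.

Unset Implicit Arguments.
Set Strict Implicit.
Theorem corollary21 (R : realType) (V : finType) (e : rel V) (T : finType)
  (f : T -> rat) (alpha beta : T)
  (e_sym : symmetric e) (e_irr : irreflexive e)
  (G_conn : forall x y : V, connect e x y)
  (f_ge1 : forall j : T, 1 <= f j)
  (beta_ne : beta != alpha)
  (beta_min : forall j : T, j != alpha -> f beta <= f j)
  (M0 : {ffun V -> T}) :
  fixprob R e f alpha M0 <=
  fixprob R e (fun j : pairT alpha beta => f (val j)) (pa alpha beta)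
    (gmap alpha beta M0).
Proof.
case: (boolP [forall v, nbhd e v != finset.set0]) => [/forallP noiso | ].
  exact: main_noiso.
rewrite negb_forall => /existsP [v0 /negPn /eqP hv0].
have iso : forall u, nbhd e u = finset.set0.
  move=> u; apply/setP => w; rewrite inE finset.in_set0; apply/negP => euw.
  have huw : u != w by apply/negP => /eqP huw; subst; rewrite e_irr in euw.
  have [x [hx hvx]] : exists x, v0 != x /\ connect e v0 x.
    case: (eqVneq u v0) => [hu|hu].
      by exists w; split => //; rewrite -hu.
    by exists u; split => //; rewrite eq_sym.
  have [z hz] := first_step hvx hx.
  have : z \in nbhd e v0 by rewrite inE.
  by rewrite hv0 finset.in_set0.
rewrite !fix_iso // mono_g //.
Qed.
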